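(* Let $m,k\in\mathbb{N}$ and let $\gamma\in\mathbb{C}$ with $\gamma,\ 1-2m-\gamma\notin\mathbb{Z}_0^-$. Then \[ {}_3F_2\left[\begin{array}{r} -2m,\ 1+k,\ \gamma;\\ -2m-k,\ 1-2m-\gamma;\end{array}1\right]_{2m}=\frac{(1+k)_{m}(\gamma)_{m}2^{2m}\left(\frac{1}{2}\right)_m(1+k+\gamma)_{2m}}{(1+k)_{2m}(\gamma)_{2m}(1+k+\gamma)_{m}}. \]
   Context: $\mathbb{N}=\{1,2,3,\dots\}$, $\mathbb{Z}_0^-=\{0,-1,-2,\dots\}$. For $a\in\mathbb{C}$ and $n\in\mathbb{N}_0$, $(a)_0=1$ and $(a)_n=a(a+1)\cdots(a+n-1)$. For $N\in\mathbb{N}_0$, ${}_3F_2\left[\begin{array}{r} a_1,a_2,a_3;\\ b_1,b_2;\end{array}z\right]_N=\sum_{n=0}^{N}\frac{(a_1)_n(a_2)_n(a_3)_n}{(b_1)_n(b_2)_n}\frac{z^n}{n!}$ (the sum of the first $N+1$ terms), defined whenever $(b_1)_n(b_2)_n\neq0$ for $0\le n\le N$. *)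

(* Defs.v *)
From HB Require Import structures.
From mathcomp Require Import all_boot all_order all_algebra.
From mathcomp Require Import complex.
Set Implicit Arguments. Unset Strict Implicit. Unset Printing Implicit Defensive.
Import Order.TTheory GRing.Theory Num.Theory.
Local Open Scope ring_scope.

Definition poch {F : nzRingType} (a : F) (n : nat) : F :=
  \prod_(i < n) (a + i%:R).

Definition F32_trunc {F : fieldType} (a1 a2 a3 b1 b2 z : F) (N : nat) : F :=
  \sum_(n < N.+1)
    (poch a1 n * poch a2 n * poch a3 n) / (poch b1 n * poch b2 n)
      * z ^+ n / (n`!)%:R.

Definition notin_Z0neg {F : nzRingType} (z : F) : Prop :=
  forall n : nat, z <> - (n%:R).

(* Main.v *)
Require Import Defs.
From HB Require Import structures.
From mathcomp Require Import all_boot all_order all_algebra.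
From mathcomp Require Import complex.
From mathcomp Require Import reals.
From mathcomp Require Import ring lra zify.
Import GRing.Theory Num.Theory.
Local Open Scope ring_scope.

Lemma pochS (F : nzRingType) (a : F) n : poch a n.+1 = poch a n * (a + n%:R).
Proof. by rewrite /poch big_ord_recr. Qed.
Lemma poch0 (F : nzRingType) (a : F) : poch a 0 = 1.
Proof. by rewrite /poch big_ord0. Qed.

Section Main.
Variable K : numFieldType.
Variables x y : K.

Definition Pc (M t : K) : K :=
  t ^+ 2 - (6 * M + 3 + 2 * (x + y)) * t +
  (2 + 3*y + y^+2 + 3*x + 2*x*y - x*y^+2 + x^+2 - x^+2*y + 11*M + 9*M*y + 9*M*x
   - M*x*y + 18*M^+2 + 4*M^+2*y + 4*M^+2*x + 8*M^+3) / (M + 1).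

Definition rhoc (M : K) : K :=
  (x + M) * (y + M) * (x + y + 2 * M) * (x + y + 2 * M + 1) / ((M + 1) * (x + y + M)).

Definition u n := poch x n * poch y n / (n`!)%:R.
Definition tt N n := (-1)^+n * u n * u (N - n).
Definition TT N := \sum_(n < N.+1) tt N n.
Definition gg m n := (-1)^+n * u n * u (2* m+1 - n) * n%:R * Pc m%:R n%:R
   / (2 * (x+y+m%:R) * (2* m+2-n)%:R).

Lemma nat_neq0 n : (n.+1)%:R != 0 :> K.
Proof. by rewrite pnatr_eq0. Qed.
Lemma fact_neq0 n : (n`!)%:R != 0 :> K.
Proof. by rewrite pnatr_eq0 -lt0n fact_gt0. Qed.

Lemma uS n : u n.+1 = u n * (x + n%:R) * (y + n%:R) / (n.+1)%:R.
Proof.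
rewrite /u !pochS factS natrM.
have := nat_neq0 n; have := fact_neq0 n => h1 h2.
rewrite mulrS in h2. field. by rewrite h2 h1.
Qed.

Lemma u0 : u 0 = 1.
Proof. by rewrite /u !poch0 fact0 mulr1 divr1. Qed.

Lemma step_n m n : (n < (2* m).+1)%N -> x + y + m%:R != 0 ->
  tt (2* m).+2 n = rhoc m%:R * tt (2* m) n + (gg m n.+1 - gg m n).
Proof.
move=> hn hs.
set k := (2* m - n)%N.
have e1 : ((2* m).+2 - n = k.+2)%N by rewrite /k; lia.
have e2 : (2* m+1 - n.+1 = k)%N by rewrite /k; lia.
have e3 : (2* m+2 - n.+1 = k.+1)%N by rewrite /k; lia.
have e4 : (2* m+1 - n = k.+1)%N by rewrite /k; lia.
have e5 : (2* m+2 - n = k.+2)%N by rewrite /k; lia.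
have ek : k%:R = 2 * m%:R - n%:R :> K.
  by rewrite /k natrB ?natrM //; lia.
have h1 := nat_neq0 k; have h2 := nat_neq0 k.+1; have h3 := nat_neq0 n;
have h4 := nat_neq0 m.
rewrite /tt /gg e1 e2 e3 e4 e5 !uS exprS.
rewrite -!natr1 ek in h1 h2 h3 h4 *.
rewrite /Pc /rhoc.
field.
by rewrite h1 h2 h3 h4 hs.
Qed.

Lemma natr2m1 m : ((2 * m).+1)%:R = 2 * m%:R + 1 :> K.
Proof. by rewrite -natr1 natrM. Qed.

Lemma sgn2m m : (-1) ^+ (2 * m) = 1 :> K.
Proof. by rewrite mulnC exprM sqrr_sign. Qed.

Lemma TT_step m : x + y + m%:R != 0 ->
  TT (2 * m.+1) = rhoc m%:R * TT (2 * m).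
Proof.
move=> hs.
have e : (2 * m.+1 = (2 * m).+2)%N by lia.
rewrite /TT e big_ord_recr big_ord_recr /=.
rewrite (eq_bigr _ (fun (i : 'I_(2 * m).+1) _ => @step_n m i (ltn_ord i) hs)) big_split /= -mulr_sumr.
rewrite -(big_mkord xpredT (fun i => gg m i.+1 - gg m i)) telescope_sumr //.
have g0 : gg m 0 = 0 by rewrite /gg mulr0n !(mulr0, mul0r).
rewrite g0 subr0 -[RHS]addr0 -!addrA; congr (_ + _).
have e1 : (2 * m + 1 - (2 * m).+1 = 0)%N by lia.
have e2 : (2 * m + 2 - (2 * m).+1 = 1)%N by lia.
rewrite /gg /tt e1 e2 subnn subSnn !u0 [u (2 * m).+2]uS [u 1]uS u0 !exprS sgn2m.
have h1 := nat_neq0 (2 * m).+1; have h4 := nat_neq0 m.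
rewrite -!natr1 natrM in h1 h4 *.
rewrite /Pc. field. by rewrite h1 h4 hs.
Qed.
Lemma pochSl (a : K) n : poch a n.+1 = a * poch (a + 1) n.
Proof.
elim: n => [|n IH]; first by rewrite pochS !poch0 addr0 mul1r mulr1.
rewrite pochS IH pochS -mulrA; congr (_ * (_ * _)).
by rewrite -natr1 addrA [a + 1 + _]addrAC.
Qed.

Lemma TT_closed m : (forall j, x + y + j%:R != 0) ->
  TT (2 * m) = poch x m * poch y m * poch (x + y + m%:R) m / (m`!)%:R.
Proof.
move=> hj; elim: m => [|m IH].
  by rewrite /TT big_ord1 /tt /= u0 expr0 !poch0 !mul1r fact0 invr1.

rewrite TT_step // IH.
have ha := hj m.
have e : poch (x + y + m.+1%:R) m.+1 * (x + y + m%:R)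
   = poch (x + y + m%:R) m * (x + y + m%:R + m%:R) * (x + y + m%:R + m.+1%:R).
  by rewrite -natr1 addrA mulrC -pochSl pochS pochS -natr1.
have e2 : poch (x + y + m.+1%:R) m.+1 = poch (x + y + m%:R) m * (x + y + m%:R + m%:R)
    * (x + y + m%:R + m.+1%:R) / (x + y + m%:R).
  by rewrite -e mulfK.
rewrite e2 !pochS factS natrM /rhoc.
have h1 := fact_neq0 m; have h2 := nat_neq0 m.
rewrite -!natr1 in h2 *.
field. by rewrite h1 h2 ha.
Qed.
End Main.

Section P.
Variable K : numFieldType.

Lemma poch_add (a : K) p n : poch a (p + n) = poch a p * poch (a + p%:R) n.
Proof.
elim: n => [|n IH]; first by rewrite addn0 poch0 mulr1.
by rewrite addnS !pochS IH natrD addrA mulrA.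
Qed.

Lemma poch_neg (c : K) n : poch (- c) n = (-1) ^+ n * poch (c - n%:R + 1) n.
Proof.
elim: n => [|n IH]; first by rewrite !poch0 expr0 mulr1.
have -> : c - n.+1%:R + 1 = c - n%:R by rewrite -natr1; ring.
have -> : poch (c - n%:R) n.+1 = (c - n%:R) * poch (c - n%:R + 1) n.
  by rewrite -add1n poch_add pochS poch0 mul1r addr0 mulr1n.
rewrite pochS IH exprS; ring.
Qed.

Lemma poch_negE (c d : K) n : c - n%:R + 1 = d -> poch (- c) n = (-1) ^+ n * poch d n.
Proof. by move=> <-; apply: poch_neg. Qed.

Lemma poch1 j : poch (1 : K) j = (j`!)%:R.
Proof.
elim: j => [|j IH]; first by rewrite poch0 fact0.
by rewrite pochS IH factS natrM mulrC -natr1 addrC.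
Qed.

Lemma poch_neq0 (a : K) n : (forall i, a + i%:R != 0) -> poch a n != 0.
Proof. by move=> h; apply/prodf_neq0 => i _; apply: h. Qed.

Lemma half_fact m : 2 ^+ (2 * m) * poch (2^-1 : K) m * (m`!)%:R = ((2 * m)`!)%:R.
Proof.
elim: m => [|m IH]; first by rewrite muln0 expr0 poch0 fact0 !mul1r.
have e : (2 * m.+1 = (2 * m).+2)%N by lia.
rewrite e !factS !natrM -IH !exprS pochS.
rewrite -!natr1 !natrM.
by field.
Qed.

Lemma sgsq (sg a b : K) : sg * sg = 1 -> (sg * a) * (sg * b) = a * b.
Proof. by move=> h; rewrite mulrACA h mul1r. Qed.
End P.


Local Open Scope complex_scope.

Theorem mainTheorem10 (R : realType) (m k : nat) (gamma : R[i])
  (hm : (0 < m)%N) (hk : (0 < k)%N)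
  (hg : notin_Z0neg gamma)
  (hg' : notin_Z0neg (1 - (2 * m)%:R - gamma)) :
  F32_trunc (- (2 * m)%:R) (1 + k%:R) gamma
            (- (2 * m)%:R - k%:R) (1 - (2 * m)%:R - gamma) 1 (2 * m)
  = (poch (1 + k%:R) m * poch gamma m * 2 ^+ (2 * m) * poch (2^-1) m
       * poch (1 + k%:R + gamma) (2 * m))
    / (poch (1 + k%:R) (2 * m) * poch gamma (2 * m) * poch (1 + k%:R + gamma) m).
Proof.
set x : R[i] := 1 + k%:R.
have hx : forall i : nat, x + i%:R != 0.
  move=> i; have -> : x + i%:R = (1 + k + i)%:R by rewrite /x !natrD mulr1n.
  by rewrite pnatr_eq0; lia.
have hy : forall i : nat, gamma + i%:R != 0.
  by move=> i; apply/negP; rewrite addr_eq0 => /eqP /hg.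
have hxy : forall j : nat, x + gamma + j%:R != 0.
  move=> j; have -> : x + gamma + j%:R = gamma + (1 + k + j)%:R.
    by rewrite /x !natrD mulr1n; ring.
  exact: hy.
set c := ((2 * m)`!)%:R / (poch x (2 * m) * poch gamma (2 * m)).
have term : forall n : 'I_(2 * m).+1,
  poch (- (2 * m)%:R) n * poch x n * poch gamma n /
    (poch (- (2 * m)%:R - k%:R) n * poch (1 - (2 * m)%:R - gamma) n) * 1 ^+ n / (n`!)%:R
  = c * @tt _ x gamma (2 * m) n.
  move=> [n hn] /=.
  set j := (2 * m - n)%N.
  have ej : (2 * m)%:R = j%:R + n%:R :> R[i] by rewrite -natrD /j subnK //; lia.
  have ej' : (2 * m = j + n)%N by rewrite /j subnK //; lia.
  rewrite (@poch_negE _ _ (1 + j%:R)); last by rewrite ej; ring.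
  have -> : - (2 * m)%:R - k%:R = - ((2 * m)%:R + k%:R) :> R[i] by rewrite opprD.
  rewrite (@poch_negE _ _ (x + j%:R)); last by rewrite ej /x; ring.
  have -> : 1 - (2 * m)%:R - gamma = - (gamma + (2 * m)%:R - 1) :> R[i] by ring.
  rewrite (@poch_negE _ _ (gamma + j%:R)); last by rewrite ej; ring.
  rewrite sgsq; last by rewrite -expr2 sqrr_sign.
  rewrite /c /tt /u -/j ej' !poch_add.
  rewrite -[((j + n)`!)%:R](@poch1 _ (j + n)) poch_add poch1 expr1n.
  have h1 : poch x j != 0 by apply: poch_neq0.
  have h2 : poch gamma j != 0 by apply: poch_neq0.
  have h3 : poch (x + j%:R) n != 0.
    by apply: poch_neq0 => i; rewrite -addrA -natrD.
  have h4 : poch (gamma + j%:R) n != 0.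
    by apply: poch_neq0 => i; rewrite -addrA -natrD.
  have h5 := fact_neq0 R[i] n; have h6 := fact_neq0 R[i] j.
  field. by rewrite h1 h2 h3 h4 h5 h6.
rewrite /F32_trunc (eq_bigr _ (fun n _ => term n)) -mulr_sumr.
rewrite (_ : \sum_(n < (2 * m).+1) _ = @TT _ x gamma (2 * m)) // TT_closed //.
have -> : poch (x + gamma) (2 * m) = poch (x + gamma) m * poch (x + gamma + m%:R) m.
  by rewrite -poch_add; congr poch; lia.
have H := half_fact R[i] m.
have H2 : 2 ^+ (2 * m) * poch 2^-1 m = ((2 * m)`!)%:R / (m`!)%:R :> R[i].
  by rewrite -H mulfK // fact_neq0.
rewrite -(mulrA _ (2 ^+ (2 * m))) H2 /c.
have h1 : poch x (2 * m) != 0 by apply: poch_neq0.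
have h2 : poch gamma (2 * m) != 0 by apply: poch_neq0.
have h3 : poch (x + gamma) m != 0 by apply: poch_neq0.
have h5 := fact_neq0 R[i] m.
field. by rewrite h1 h2 h3 h5.
Qed.
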